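(* Let $\pi\in\mathfrak{S}_n$ avoid $231$, and let $(a,c,b)$ and $(d,f,e)$ be $3$-cycles in the disjoint cycle decomposition of $\pi$ with $a<b<c$, $d<e<f$ and $a<d$. Then one of the following holds: (1) $c<d$ (so that each of $a,b,c$ is less than each of $d,e,f$); (2) $c>f$ and $d<b<e$; (3) $c>f$ and $e<b<f$.
   Context: A permutation avoids $231$ if there are no indices $i<j<k$ with $\pi_k<\pi_i<\pi_j$. The cycle $(a,c,b)$ means $a\mapsto c\mapsto b\mapsto a$. *)

(* Defs.v *)
From mathcomp Require Import all_boot all_order all_fingroup.
Set Implicit Arguments. Unset Strict Implicit. Unset Printing Implicit Defensive.

Definition avoids231 (n : nat) (s : 'S_n) : Prop :=
  ~ exists i j k : 'I_n, [/\ i < j, j < k & s k < s i < s j].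

Definition is_3cycle (n : nat) (s : 'S_n) (x y z : 'I_n) : Prop :=
  [/\ x != y, y != z, x != z & [/\ s x = y, s y = z & s z = x]].

(* Main.v *)
Require Import Defs.
From mathcomp Require Import all_boot all_order all_fingroup.
From mathcomp Require Import zify.

Theorem lemma3p3 (n : nat) (s : 'S_n) (a b c d e f : 'I_n) :
  avoids231 s ->
  is_3cycle s a c b -> is_3cycle s d f e ->
  a < b -> b < c -> d < e -> e < f -> a < d ->
  c < d \/ (f < c /\ d < b < e) \/ (f < c /\ e < b < f).
Proof.
move=> Hav [ac cb ab [sa sc sb]] [df fe de [sd sf se]] lab lbc lde lef lad.
have H231 : forall i j k : 'I_n, i < j -> j < k -> s k < s i -> s i < s j -> False.
  by move=> i j k h1 h2 h3 h4; apply: Hav; exists i, j, k; split=>//; rewrite h3 h4.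
have E : forall x y : 'I_n, (x:nat) = y -> s x = s y.
  by move=> x y /val_inj ->.
have cd : (c:nat) <> d.
  move=> h; have := E _ _ h; rewrite sc sd => /(congr1 val) /=; lia.
have cf : (c:nat) <> f.
  move=> h; have := E _ _ h; rewrite sc sf => h2.
  have := E _ _ (congr1 val h2); rewrite sb se => /(congr1 val) /=; lia.
have bd : (b:nat) <> d.
  move=> h; have := E _ _ h; rewrite sb sd => /(congr1 val) /=; lia.
have be : (b:nat) <> e.
  move=> h; have := E _ _ h; rewrite sb se => /(congr1 val) /=; lia.
have bf : (b:nat) <> f.
  move=> h; have := E _ _ h; rewrite sb sf => /(congr1 val) /=; lia.
case: (ltnP c d) => hcd; [by left|right].
have hfc : f < c.
  case: (ltnP f c) => // hcf; exfalso.
  apply: (H231 a d e); rewrite ?sa ?sd ?se; lia.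
case: (ltnP b d) => hbd.
  exfalso; apply: (H231 e f c); rewrite ?se ?sf ?sc; lia.
case: (ltnP f b) => hbf.
  exfalso; apply: (H231 e f b); rewrite ?se ?sf ?sb; lia.
case: (ltnP b e) => hbe.
  left; split => //; lia.
right; split => //; lia.
Qed.
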